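(* Let $F=Z+W\mathbf j\in L^1(\mathbb T^d;\mathbb H^{s\times t})$ with $Z,W:\mathbb T^d\to\mathbb C_{\mathbf i}^{s\times t}$. Define the complex symbols $$G_{\mathrm L}(\boldsymbol\theta)=\begin{pmatrix}Z(\boldsymbol\theta)&W(\boldsymbol\theta)\\-\overline{W(-\boldsymbol\theta)}&\overline{Z(-\boldsymbol\theta)}\end{pmatrix},\qquad G_{\mathrm R}(\boldsymbol\theta)=\begin{pmatrix}Z(\boldsymbol\theta)&W(-\boldsymbol\theta)\\-\overline{W(\boldsymbol\theta)}&\overline{Z(-\boldsymbol\theta)}\end{pmatrix}.$$ Then for every $\boldsymbol n\in\mathbb N^d$, $\Phi(T^{(L)}_{\boldsymbol n}(F))=T_{\boldsymbol n}(G_{\mathrm L})$ and $\Phi(T^{(R)}_{\boldsymbol n}(F))=T_{\boldsymbol n}(G_{\mathrm R})$.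
   Context: $\mathbb H$ is the quaternion algebra with units $\mathbf i,\mathbf j,\mathbf k=\mathbf i\mathbf j$; $\mathbb C_{\mathbf i}=\operatorname{span}_{\mathbb R}\{1,\mathbf i\}\cong\mathbb C$, bar = complex conjugation. For $A=Z+W\mathbf j\in\mathbb H^{s\times t}$, $\Phi(A)=\begin{bmatrix}Z&W\\-\overline W&\overline Z\end{bmatrix}\in\mathbb C^{2s\times2t}$; for an $s\times t$-block matrix $A=[A_{\alpha\beta}]$, $\Phi(A)=[\Phi(A_{\alpha\beta})]_{\alpha,\beta}$ (applied blockwise). $\mathbb T^d=[-\pi,\pi)^d$. Left/right Fourier coefficients: $\widehat F^{(L)}(\boldsymbol k)=(2\pi)^{-d}\int e^{-\mathbf i\langle\boldsymbol k,\boldsymbol\theta\rangle}F(\boldsymbol\theta)d\boldsymbol\theta$, $\widehat F^{(R)}(\boldsymbol k)=(2\pi)^{-d}\int F(\boldsymbol\theta)e^{-\mathbf i\langle\boldsymbol k,\boldsymbol\theta\rangle}d\boldsymbol\theta$. With $\Lambda_{\boldsymbol n}=\prod_\ell\{0,\dots,n_\ell-1\}$ (lexicographic), $T^{(\tau)}_{\boldsymbol n}(F)=[\widehat F^{(\tau)}(\alpha-\beta)]_{\alpha,\beta\in\Lambda_{\boldsymbol n}}$. For complex $G:\mathbb T^d\to\mathbb C^{2s\times2t}$, $T_{\boldsymbol n}(G)=[\widehat G(\alpha-\beta)]_{\alpha,\beta\in\Lambda_{\boldsymbol n}}$ with $\widehat G(\boldsymbol k)=(2\pi)^{-d}\int G(\boldsymbol\theta)e^{-\mathbf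 i\langle\boldsymbol k,\boldsymbol\theta\rangle}d\boldsymbol\theta$. *)

(* Defs.v *)
From HB Require Import structures.
From mathcomp Require Import all_boot all_order all_algebra.
From mathcomp Require Import all_classical all_reals all_analysis.
From mathcomp Require Import complex.
Import Order.TTheory GRing.Theory Num.Theory.
Set Implicit Arguments.
Unset Strict Implicit.
Unset Printing Implicit Defensive.
Local Open Scope classical_set_scope.
Local Open Scope ring_scope.

(* d-dimensional Lebesgue measure, built as an iterated product measure     *)
Record msp (R : realType) := MSp {
  msp_disp : measure_display;
  msp_car : measurableType msp_disp;
  msp_mu : {sigma_finite_measure set msp_car -> \bar R} }.
Arguments MSp {R msp_disp msp_car}.
Arguments msp_car {R}.
Arguments msp_mu {R}.
Definition unit_mu (R : realType) : {sigma_finite_measure set unit -> \bar R} := @dirac _ unit tt R.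
Definition leb (R : realType) : {sigma_finite_measure set (measurableTypeR R) -> \bar R} :=
  @lebesgue_measure R.
Definition pm (R : realType) (S : msp R) :
  set (measurableTypeR R * msp_car S)%type -> \bar R := (leb R \x msp_mu S)%E.
HB.instance Definition _ (R : realType) (S : msp R) :=
  Measure.copy (@pm R S) (leb R \x msp_mu S)%E.
Lemma pm_sigma_finite (R : realType) (S : msp R) : sigma_finite setT (@pm R S).
Proof.
rewrite /pm.
have /sigma_finiteP[F [TF ndF Foo]] := sigma_finiteT (leb R).
have /sigma_finiteP[G [TG ndG Goo]] := sigma_finiteT (msp_mu S).
exists (fun n => F n `*` G n).
 rewrite -setXTT TF TG predeqE => -[x y]; split.
    move=> [/= [n _ Fnx] [k _ Gky]]; exists (maxn n k) => //; split.
    - by move: x Fnx; exact/subsetPset/ndF/leq_maxl.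
    - by move: y Gky; exact/subsetPset/ndG/leq_maxr.
  by move=> [n _ []/= ? ?]; split; exists n.
move=> k; have [? ?] := Foo k; have [? ?] := Goo k.
split; first exact: measurableX.
by rewrite product_measure1E// lte_mul_pinfty// ge0_fin_numE.
Qed.
HB.instance Definition _ (R : realType) (S : msp R) :=
  Measure_isSigmaFinite.Build _ _ _ (@pm R S) (@pm_sigma_finite R S).

Fixpoint Rn_space (R : realType) (d : nat) : msp R :=
  match d with
  | 0 => MSp (unit_mu R)
  | d'.+1 => MSp (@pm R (Rn_space R d'))
  end.

Fixpoint coords (R : realType) (d : nat) : msp_car (Rn_space R d) -> nat -> R :=
  match d return msp_car (Rn_space R d) -> nat -> R with
  | 0 => fun _ _ => 0
  | d'.+1 => fun p i => if i is i'.+1 then coords p.2 i' else p.1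
  end.

Definition pt (R : realType) (d : nat) (p : msp_car (Rn_space R d)) : 'I_d -> R :=
  fun l => coords p (nat_of_ord l).

Definition torus (R : realType) (d : nat) : set (msp_car (Rn_space R d)) :=
  [set p | forall l : 'I_d, - pi <= pt p l < pi].

Definition tint (R : realType) (d : nat) (f : ('I_d -> R) -> R) : R :=
  Rintegral (msp_mu (Rn_space R d)) (@torus R d) (fun p => f (pt p)).

Definition tintegrable (R : realType) (d : nat) (f : ('I_d -> R) -> R) : Prop :=
  (msp_mu (Rn_space R d)).-integrable (@torus R d) (fun p => (f (pt p))%:E).

(* Quaternions  q = a + b i + c j + d k  with Hamilton's product            *)
Record quat (R : Type) := Quat { q0 : R; q1 : R; q2 : R; q3 : R }.
Arguments Quat {R}.
Arguments q0 {R}. Arguments q1 {R}. Arguments q2 {R}. Arguments q3 {R}.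

Definition qadd (R : realType) (p q : quat R) : quat R :=
  Quat (q0 p + q0 q) (q1 p + q1 q) (q2 p + q2 q) (q3 p + q3 q).

Definition qmul (R : realType) (p q : quat R) : quat R :=
  Quat (q0 p * q0 q - q1 p * q1 q - q2 p * q2 q - q3 p * q3 q)
       (q0 p * q1 q + q1 p * q0 q + q2 p * q3 q - q3 p * q2 q)
       (q0 p * q2 q - q1 p * q3 q + q2 p * q0 q + q3 p * q1 q)
       (q0 p * q3 q + q1 p * q2 q - q2 p * q1 q + q3 p * q0 q).

Definition qj (R : realType) : quat R := Quat 0 0 1 0.

Definition c2q (R : realType) (z : R[i]) : quat R := Quat (complex.Re z) (complex.Im z) 0 0.

Definition qscale (R : realType) (c : R) (q : quat R) : quat R :=
  Quat (c * q0 q) (c * q1 q) (c * q2 q) (c * q3 q).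

Definition qint (R : realType) (d : nat) (f : ('I_d -> R) -> quat R) : quat R :=
  Quat (tint (fun x => q0 (f x))) (tint (fun x => q1 (f x)))
       (tint (fun x => q2 (f x))) (tint (fun x => q3 (f x))).

Definition cint (R : realType) (d : nat) (f : ('I_d -> R) -> R[i]) : R[i] :=
  Complex (tint (fun x => complex.Re (f x))) (tint (fun x => complex.Im (f x))).

Definition dotk (R : realType) (d : nat) (k : 'I_d -> int) (th : 'I_d -> R) : R :=
  \sum_(l < d) (k l)%:~R * th l.

Definition cexpi (R : realType) (phi : R) : R[i] := Complex (cos phi) (sin phi).
Definition qexpi (R : realType) (phi : R) : quat R := c2q (cexpi phi).

Definition nrm (R : realType) (d : nat) : R := ((2 * pi) ^+ d)^-1.

Definition FcoefL (R : realType) (d s t : nat)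
  (F : ('I_d -> R) -> 'M[quat R]_(s, t)) (k : 'I_d -> int) : 'M[quat R]_(s, t) :=
  \matrix_(a < s, b < t)
    qscale (nrm R d) (qint (fun th => qmul (qexpi (- dotk k th)) (F th a b))).

Definition FcoefR (R : realType) (d s t : nat)
  (F : ('I_d -> R) -> 'M[quat R]_(s, t)) (k : 'I_d -> int) : 'M[quat R]_(s, t) :=
  \matrix_(a < s, b < t)
    qscale (nrm R d) (qint (fun th => qmul (F th a b) (qexpi (- dotk k th)))).

Definition Fcoef (R : realType) (d p q : nat)
  (G : ('I_d -> R) -> 'M[R[i]]_(p, q)) (k : 'I_d -> int) : 'M[R[i]]_(p, q) :=
  \matrix_(a < p, b < q)
    (real_complex R (nrm R d) * cint (fun th => G th a b * cexpi (- dotk k th))).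

Definition Lam (d : nat) (n : 'I_d -> nat) : Type := forall l : 'I_d, 'I_(n l).

Definition mdiff (d : nat) (n : 'I_d -> nat) (al be : Lam n) : 'I_d -> int :=
  fun l => (nat_of_ord (al l))%:Z - (nat_of_ord (be l))%:Z.

Definition blockmx (d : nat) (n : 'I_d -> nat) (X : Type) := Lam n -> Lam n -> X.

Definition ToepL (R : realType) (d s t : nat) (n : 'I_d -> nat)
  (F : ('I_d -> R) -> 'M[quat R]_(s, t)) : blockmx n 'M[quat R]_(s, t) :=
  fun al be => FcoefL F (mdiff al be).

Definition ToepR (R : realType) (d s t : nat) (n : 'I_d -> nat)
  (F : ('I_d -> R) -> 'M[quat R]_(s, t)) : blockmx n 'M[quat R]_(s, t) :=
  fun al be => FcoefR F (mdiff al be).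

Definition Toep (R : realType) (d p q : nat) (n : 'I_d -> nat)
  (G : ('I_d -> R) -> 'M[R[i]]_(p, q)) : blockmx n 'M[R[i]]_(p, q) :=
  fun al be => Fcoef G (mdiff al be).

Definition qZ (R : realType) (s t : nat) (A : 'M[quat R]_(s, t)) : 'M[R[i]]_(s, t) :=
  \matrix_(a < s, b < t) Complex (q0 (A a b)) (q1 (A a b)).
Definition qW (R : realType) (s t : nat) (A : 'M[quat R]_(s, t)) : 'M[R[i]]_(s, t) :=
  \matrix_(a < s, b < t) Complex (q2 (A a b)) (q3 (A a b)).
Definition cconj (R : realType) (s t : nat) (M : 'M[R[i]]_(s, t)) : 'M[R[i]]_(s, t) :=
  map_mx (fun z => z^*) M.

Definition Phi (R : realType) (s t : nat) (A : 'M[quat R]_(s, t)) : 'M[R[i]]_(s + s, t + t) :=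
  block_mx (qZ A) (qW A) (- cconj (qW A)) (cconj (qZ A)).

Definition blockPhi (R : realType) (d s t : nat) (n : 'I_d -> nat)
  (T : blockmx n 'M[quat R]_(s, t)) : blockmx n 'M[R[i]]_(s + s, t + t) :=
  fun al be => Phi (T al be).

Definition negv (R : realType) (d : nat) (th : 'I_d -> R) : 'I_d -> R := fun l => - th l.

Definition GL (R : realType) (d s t : nat) (Z W : ('I_d -> R) -> 'M[R[i]]_(s, t))
  (th : 'I_d -> R) : 'M[R[i]]_(s + s, t + t) :=
  block_mx (Z th) (W th) (- cconj (W (negv th))) (cconj (Z (negv th))).

Definition GR (R : realType) (d s t : nat) (Z W : ('I_d -> R) -> 'M[R[i]]_(s, t))
  (th : 'I_d -> R) : 'M[R[i]]_(s + s, t + t) :=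
  block_mx (Z th) (W (negv th)) (- cconj (W th)) (cconj (Z (negv th))).

Arguments ToepL {R d s t} n F.
Arguments ToepR {R d s t} n F.
Arguments Toep {R d p q} n G.
Arguments blockPhi {R d s t n} T.

(* Main.v *)
Require Import Defs.
From HB Require Import structures.
From mathcomp Require Import all_boot all_order all_algebra.
From mathcomp Require Import all_classical all_reals all_analysis.
From mathcomp Require Import complex.
From mathcomp Require Import ring.
Import Order.TTheory GRing.Theory Num.Theory.
Import numFieldNormedType.Exports.
Local Open Scope classical_set_scope.
Local Open Scope ring_scope.
Import HBNNSimple.
Section inv_integral.
Context d0 (T : measurableType d0) (R : realType) (mu : {measure set T -> \bar R}) (phi : T -> T).
Hypotheses (mphi : forall A, measurable A -> measurable (phi @^-1` A))
  (phiK : involutive phi)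
  (pres : forall A, measurable A -> mu (phi @^-1` A) = mu A).

Definition cphi (h : T -> R) := fun x => h (phi x).

Lemma cphi_mfun (h : {nnsfun T >-> R}) : measurable_fun setT (cphi h).
Proof.
move=> _ Y mY; rewrite setTI.
have -> : cphi h @^-1` Y = phi @^-1` (h @^-1` Y) by [].
apply: mphi; exact: measurable_funPTI.
Qed.

HB.instance Definition _ (h : {nnsfun T >-> R}) :=
  isMeasurableFun.Build _ _ T R (cphi h) (cphi_mfun h).

Lemma cphi_fim (h : {nnsfun T >-> R}) : finite_set (range (cphi h)).
Proof.
apply: (sub_finite_set _ (fimfunP h)) => _ [x _ <-]; exists (phi x) => //.
Qed.

HB.instance Definition _ (h : {nnsfun T >-> R}) :=
  FiniteImage.Build T R (cphi h) (cphi_fim h).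

Lemma cphi_ge0 (h : {nnsfun T >-> R}) : forall x, 0 <= cphi h x.
Proof. by move=> x; rewrite /cphi. Qed.

HB.instance Definition _ (h : {nnsfun T >-> R}) :=
  isNonNegFun.Build T R (cphi h) (cphi_ge0 h).

Definition cphi_nnsfun (h : {nnsfun T >-> R}) : {nnsfun T >-> R} := cphi h.

Lemma sintegral_cphi (h : {nnsfun T >-> R}) :
  sintegral mu (cphi_nnsfun h) = sintegral mu h.
Proof.
rewrite /sintegral; apply: eq_fsbigr => x _; congr (_ * _)%E.
have -> : cphi_nnsfun h @^-1` [set x] = phi @^-1` (h @^-1` [set x]) by [].
by rewrite pres//; exact: measurable_funPTI.
Qed.

Let nnint_le (g1 g2 : T -> \bar R) : (forall x, g1 x = g2 (phi x)) ->
  (ereal_sup [set sintegral mu h | h in [set h : {nnsfun T >-> R} | forall x, ((h x)%:E <= g1 x)%E]]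
  <= ereal_sup [set sintegral mu h | h in [set h : {nnsfun T >-> R} | forall x, ((h x)%:E <= g2 x)%E]])%E.
Proof.
move=> g12; apply: ge_ereal_sup => _ [h hle <-]; apply: ereal_sup_ubound.
exists (cphi_nnsfun h); last exact: sintegral_cphi.
by move=> x; rewrite /= /cphi; have := hle (phi x); rewrite g12 phiK.
Qed.

Lemma nnint_cphi (g : T -> \bar R) :
  ereal_sup [set sintegral mu h | h in [set h : {nnsfun T >-> R} | forall x, ((h x)%:E <= g (phi x))%E]]
  = ereal_sup [set sintegral mu h | h in [set h : {nnsfun T >-> R} | forall x, ((h x)%:E <= g x)%E]].
Proof.
apply/eqP; rewrite eq_le (@nnint_le (fun x => g (phi x)) g)//=.
by apply: nnint_le => x; rewrite phiK.
Qed.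

Lemma integral_inv (D : set T) (f : T -> \bar R) : phi @^-1` D = D ->
  (\int[mu]_(x in D) f (phi x) = \int[mu]_(x in D) f x)%E.
Proof.
move=> DE.
rewrite integralE [RHS]integralE.
have H (g : T -> \bar R) : (forall x, 0 <= g x)%E ->
   (\int[mu]_(x in D) g (phi x) = \int[mu]_(x in D) g x)%E.
  move=> g0; rewrite !ge0_integralE//=.
  have Hm x : (x \in D) = (phi x \in D) by rewrite -{1}DE.
  have -> : (fun x => g (phi x)) \_ D = (fun x => (g \_ D) (phi x)).
    by apply/funext => x; rewrite /patch Hm.
  exact: nnint_cphi.
rewrite (@funepos_comp T T R f phi) (@funeneg_comp T T R f phi).
by rewrite -(H (f^\+)%E) // -(H (f^\-)%E).
Qed.

End inv_integral.
Section nullset.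
Context d0 (T : measurableType d0) (R : realType) (mu : {measure set T -> \bar R}).

Lemma sintegral_nullproj (h : {nnsfun T >-> R}) (N : set T) (mN : measurable N)
  (mNc : measurable (~` N)) :
  mu N = 0%E -> sintegral mu (mul_nnsfun h (indic_nnsfun R mNc)) = sintegral mu h.
Proof.
move=> N0; rewrite -!integralT_nnsfun.
rewrite [RHS](ge0_negligible_integral (D:=setT) mN)//=.
rewrite [RHS]integral_mkcond; apply: eq_integral => x _.
  rewrite /patch measurable_realfun.mindicE; by rewrite in_setD in_setC in_setT; case: (x \in N); rewrite /= ?mulr0 ?mulr1.
  exact/measurable_realfun.measurable_EFinP/measurable_funPT.
by move=> x _; rewrite lee_fin.
Qed.

Lemma integral_null (D N : set T) (f : T -> \bar R) : measurable N -> mu N = 0%E ->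
  (\int[mu]_(x in D) f x = \int[mu]_(x in D `\` N) f x)%E.
Proof.
move=> mN N0.
have mNc : measurable (~` N) by exact: measurableC.
have H (g : T -> \bar R) : (forall x, 0 <= g x)%E ->
    (\int[mu]_(x in D) g x = \int[mu]_(x in D `\` N) g x)%E.
  move=> g0; rewrite !ge0_integralE//=; apply/eqP; rewrite eq_le; apply/andP; split.
    apply: ge_ereal_sup => _ [h hle <-]; apply: ereal_sup_ubound.
    exists (mul_nnsfun h (indic_nnsfun R mNc)); last exact: sintegral_nullproj.
    move=> x /=; rewrite measurable_realfun.mindicE /patch in_setD in_setC.
    have := hle x; rewrite /patch.
    by case: (boolP (x \in N)) => xN /=; rewrite ?andbF ?andbT ?mulr0 ?mulr1.
  apply: ge_ereal_sup => _ [h hle <-]; apply: ereal_sup_ubound.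
  exists h => // x; apply: (le_trans (hle x)); rewrite /patch.
  case: ifPn => [|_]; last by case: ifP.
  by rewrite inE => -[xD _]; rewrite ifT// inE.
by rewrite integralE [RHS]integralE !H.
Qed.

End nullset.
Fixpoint negR (R : realType) (d : nat) : msp_car (Rn_space R d) -> msp_car (Rn_space R d) :=
  match d return msp_car (Rn_space R d) -> msp_car (Rn_space R d) with
  | 0 => fun p => p
  | d'.+1 => fun p => (- p.1, @negR R d' p.2)
  end.
Arguments negR {R d}.

Lemma coords_negR (R : realType) d (p : msp_car (Rn_space R d)) i :
  coords (negR p) i = - coords p i.
Proof.
elim: d p i => [|d IH] p i /=; first by rewrite oppr0.
by case: i => [|i] //; rewrite IH.
Qed.

Lemma coords_out (R : realType) d (p : msp_car (Rn_space R d)) i :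
  (d <= i)%N -> coords p i = 0.
Proof.
elim: d p i => [|d IH] p i //=.
by case: i => [|i] // lt; rewrite IH.
Qed.

Lemma negRK (R : realType) d : involutive (@negR R d).
Proof.
elim: d => [|d IH] p //=.
by case: p => a b /=; rewrite opprK IH.
Qed.

Lemma measurable_negR (R : realType) d : measurable_fun setT (@negR R d).
Proof.
elim: d => [|d IH] /=; first exact: measurable_id.
apply/measurable_fun_pairP; split.
  have mo : measurable_fun setT (-%R : measurableTypeR R -> measurableTypeR R).
    exact: measurable_realfun.oppr_measurable.
  exact: (measurableT_comp mo measurable_fst).
exact: (measurableT_comp IH measurable_snd).
Qed.
Lemma oppR_mphi (R : realType) (A : set (measurableTypeR R)) : measurable A ->
  measurable ((-%R : measurableTypeR R -> measurableTypeR R) @^-1` A).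
Proof.
move=> mA.
have mo : measurable_fun setT (-%R : measurableTypeR R -> measurableTypeR R).
  exact: measurable_realfun.oppr_measurable.
by have := mo measurableT A mA; rewrite setTI.
Qed.

Lemma negR_mphi (R : realType) d (A : set (msp_car (Rn_space R d))) : measurable A ->
  measurable (negR @^-1` A).
Proof.
by move=> mA; have := @measurable_negR R d measurableT A mA; rewrite setTI.
Qed.

Lemma negR_pres (R : realType) d (A : set (msp_car (Rn_space R d))) : measurable A ->
  msp_mu (Rn_space R d) (negR @^-1` A) = msp_mu (Rn_space R d) A.
Proof.
elim: d A => [|d IH] A mA //=.
rewrite /pm /product_measure1 /=.
transitivity (\int[leb R]_x msp_mu (Rn_space R d) (xsection A (- x)%R))%E.
  apply: eq_integral => x _; rewrite -[RHS]IH; last exact: measurable_xsection.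
  by [].
have := @integral_inv _ _ R (leb R) (-%R) (@oppR_mphi R) (@opprK _) _ setT
   (fun x => msp_mu (Rn_space R d) (xsection A x)).
apply; last exact: preimage_setT.
move=> B mB; exact: lebesgue_measureN.
Qed.
Definition Hset (R : realType) d (l : nat) : set (msp_car (Rn_space R d)) :=
  [set p | coords p l = - pi].

Lemma Hset_null (R : realType) d l :
  measurable (@Hset R d l) /\ msp_mu (Rn_space R d) (@Hset R d l) = 0%E.
Proof.
elim: d l => [|d IH] l.
  have -> : @Hset R 0 l = set0.
    apply/seteqP; split => p //=; rewrite /Hset /= => /esym/eqP.
    by rewrite oppr_eq0 (gt_eqF (@pi_gt0 R)).
  by split => //; exact: measure0.
case: l => [|l].
  have -> : @Hset R d.+1 0 = [set (- pi : R)] `*` setT.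
    by apply/seteqP; split => -[a b]; rewrite /Hset /setX /=; [by move=> ->|by case=> ->].
  split; first exact: measurableX.
  rewrite /= /pm product_measure1E//.
  by rewrite [X in (X * _)%E](_ : _ = 0%E) ?mul0e//; exact: lebesgue_measure_set1.
have [mH H0] := IH l.
have -> : @Hset R d.+1 l.+1 = setT `*` @Hset R d l.
  by apply/seteqP; split => -[a b]; rewrite /Hset /setX /=; [by move=> ->|by case=> _ ->].
split; first exact: measurableX.
by rewrite /= /pm product_measure1E// H0 mule0.
Qed.

Definition Nset (R : realType) d : set (msp_car (Rn_space R d)) :=
  \bigcup_l @Hset R d l.

Lemma Nset_null (R : realType) d :
  measurable (@Nset R d) /\ msp_mu (Rn_space R d) (@Nset R d) = 0%E.
Proof.
have mN : measurable (@Nset R d).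
  by apply: bigcupT_measurable => l; have [] := @Hset_null R d l.
split => //.
have : (msp_mu (Rn_space R d)).-negligible (@Nset R d).
  apply: negligible_bigcup => l; have [mH H0] := @Hset_null R d l.
  exists (@Hset R d l); split; [exact: mH|exact: H0|exact: subset_refl].
case=> M [mM M0 NM].
apply/eqP; rewrite eq_le measure_ge0 andbT -M0.
have := @le_measure _ _ _ (msp_mu (Rn_space R d)) (@Nset R d) M.
by apply; [rewrite inE; exact: mN|rewrite inE; exact: mM|exact: NM].
Qed.

Definition Oset (R : realType) d : set (msp_car (Rn_space R d)) :=
  [set p | forall l : 'I_d, - pi < pt p l < pi].

Lemma torusN (R : realType) d : @torus R d `\` @Nset R d = @Oset R d.
Proof.
apply/seteqP; split => p /=.
  move=> [Tp Np] l; have /andP[h1 h2] := Tp l; rewrite h2 andbT.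
  rewrite lt_neqAle h1 andbT; apply/eqP => E; apply: Np.
  by exists (nat_of_ord l) => //; rewrite /Hset /= E.
move=> Op; split.
  by move=> l; have /andP[h1 h2] := Op l; rewrite h2 (ltW h1).
case=> l _; rewrite /Hset /= => E.
case: (ltnP l d) => ld.
  have /andP[h1 _] := Op (Ordinal ld).
  by move: h1; rewrite /pt /= E ltxx.
move: E; rewrite coords_out// => /esym/eqP.
by rewrite oppr_eq0 (gt_eqF (@pi_gt0 R)).
Qed.

Lemma pt_negR (R : realType) d (p : msp_car (Rn_space R d)) : pt (negR p) = negv (pt p).
Proof. by apply/funext => l; rewrite /pt /negv coords_negR. Qed.

Lemma oppr_pi_itv (R : realType) (x : R) : (- pi < - x < pi) = (- pi < x < pi).
Proof. by rewrite ltrN2 ltrNl andbC. Qed.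

Lemma Oset_inv (R : realType) d : negR @^-1` (@Oset R d) = @Oset R d.
Proof.
apply/seteqP; split => p /=; rewrite /Oset /= => H l; have := H l;
  by rewrite pt_negR /negv oppr_pi_itv.
Qed.
Lemma fine_sub_sym (R : realType) (a b : \bar R) : (0 <= a)%E -> (0 <= b)%E ->
  fine (a - b)%E = - fine (b - a)%E.
Proof.
case: a => [r||] //; case: b => [s||] //= _ _; rewrite ?oppr0 //.
by rewrite opprB.
Qed.

Lemma RintegralN' d0 (T : measurableType d0) (R : realType) (mu : {measure set T -> \bar R})
  (D : set T) (f : T -> R) :
  Rintegral mu D (fun x => - f x) = - Rintegral mu D f.
Proof.
rewrite /Rintegral.
have -> : (fun x => (- f x)%:E) = (\- (fun x => (f x)%:E))%E.
  by apply/funext => x; rewrite EFinN.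
rewrite integralE funeposN funenegN [in RHS]integralE.
apply: fine_sub_sym; exact: integral_ge0.
Qed.

Lemma tint_neg (R : realType) d (f : ('I_d -> R) -> R) :
  tint (fun th => - f th) = - tint f.
Proof. exact: RintegralN'. Qed.

Lemma tint_ext (R : realType) d (f g : ('I_d -> R) -> R) :
  (forall th, (forall l, - pi <= th l < pi) -> f th = g th) -> tint f = tint g.
Proof.
move=> H; rewrite /tint; apply: eq_Rintegral => p; rewrite inE => Tp.
exact: H.
Qed.

Lemma tint_refl (R : realType) d (f g : ('I_d -> R) -> R) :
  (forall th, (forall l, - pi < th l < pi) -> f th = g (negv th)) -> tint f = tint g.
Proof.
move=> H; rewrite /tint /Rintegral.
have [mN N0] := @Nset_null R d.
rewrite (@integral_null _ _ R (msp_mu (Rn_space R d)) _ _ _ mN N0).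
rewrite [in RHS](@integral_null _ _ R (msp_mu (Rn_space R d)) _ _ _ mN N0) torusN.
congr fine.
transitivity (\int[msp_mu (Rn_space R d)]_(x in @Oset R d) (g (pt (negR x)))%:E)%E.
  apply: eq_integral => p; rewrite inE => Op.
  by rewrite H // pt_negR.
apply: (@integral_inv _ _ R _ negR (@negR_mphi R d) (@negRK R d) (@negR_pres R d)
  (@Oset R d) (fun p => (g (pt p))%:E)).
exact: Oset_inv.
Qed.
Lemma rc_mul (R : realType) (x a b : R) : real_complex R x * Complex a b = Complex (x * a) (x * b).
Proof. rewrite /=. congr Complex; ring. Qed.

Lemma cmul (R : realType) (a b c e : R) : Complex a b * Complex c e = Complex (a * c - b * e) (a * e + b * c).
Proof. by []. Qed.

Lemma cconjE (R : realType) (a b : R) : (Complex a b)^* = Complex a (- b).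
Proof. by []. Qed.

Lemma coppE (R : realType) (a b : R) : - (Complex a b) = Complex (- a) (- b).
Proof. by []. Qed.
Lemma open_negv (R : realType) d (th : 'I_d -> R) : (forall l, - pi < th l < pi) ->
  forall l, - pi <= negv th l < pi.
Proof. by move=> H l; have := H l; rewrite -oppr_pi_itv => /andP[h1 h2]; rewrite /negv h2 ltW. Qed.

Lemma dotk_negv (R : realType) d (k : 'I_d -> int) (th : 'I_d -> R) : dotk k (negv th) = - dotk k th.
Proof. by rewrite /dotk -sumrN; apply: eq_bigr => l _; rewrite /negv mulrN. Qed.

Ltac ptw hF :=
  match goal with
  | |- context [negv] =>
      symmetry; apply: tint_refl => th /open_negv /hF ->;
      rewrite !mxE /= ?dotk_negv ?opprK ?cosN ?sinN
  | _ => apply: tint_ext => th /hF ->; rewrite !mxE /=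
  end.
Lemma Fcoef_block (R : realType) d s t (A B C D : ('I_d -> R) -> 'M[R[i]]_(s, t)) k :
  Fcoef (fun th => block_mx (A th) (B th) (C th) (D th)) k =
  block_mx (Fcoef A k) (Fcoef B k) (Fcoef C k) (Fcoef D k).
Proof.
apply/matrixP => i j; rewrite mxE.
case: (split_ordP i) => i0 ->; case: (split_ordP j) => j0 ->;
  rewrite ?block_mxEul ?block_mxEur ?block_mxEdl ?block_mxEdr mxE;
  congr (_ * cint _); apply/funext => th;
  by rewrite ?block_mxEul ?block_mxEur ?block_mxEdl ?block_mxEdr.
Qed.

Lemma keyL (R : realType) (d s t : nat)
  (F : ('I_d -> R) -> 'M[quat R]_(s, t))
  (Z W : ('I_d -> R) -> 'M[R[i]]_(s, t))
  (hF : forall th : 'I_d -> R, (forall l, - pi <= th l < pi) ->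
          F th = \matrix_(a < s, b < t) qadd (c2q (Z th a b)) (qmul (c2q (W th a b)) (qj R)))
  k : Phi (FcoefL F k) = Fcoef (GL Z W) k.
Proof.
rewrite /Phi /GL Fcoef_block; congr block_mx; apply/matrixP => a b; rewrite !mxE ?cconjE ?coppE rc_mul /=.
all: congr Complex; rewrite -?mulrN -?tint_neg; congr (_ * _).
all: ptw hF.
all: repeat match goal with |- context [@fun_of_matrix _ _ _ ?Mx ?i ?j] => case: (@fun_of_matrix _ _ _ Mx i j) => ? ? end.
all: rewrite /cexpi /= ?cosN ?sinN.
all: ring.
Qed.

Lemma keyR (R : realType) (d s t : nat)
  (F : ('I_d -> R) -> 'M[quat R]_(s, t))
  (Z W : ('I_d -> R) -> 'M[R[i]]_(s, t))
  (hF : forall th : 'I_d -> R, (forall l, - pi <= th l < pi) ->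
          F th = \matrix_(a < s, b < t) qadd (c2q (Z th a b)) (qmul (c2q (W th a b)) (qj R)))
  k : Phi (FcoefR F k) = Fcoef (GR Z W) k.
Proof.
rewrite /Phi /GR Fcoef_block; congr block_mx; apply/matrixP => a b; rewrite !mxE ?cconjE ?coppE rc_mul /=.
all: congr Complex; rewrite -?mulrN -?tint_neg; congr (_ * _).
all: ptw hF.
all: repeat match goal with |- context [@fun_of_matrix _ _ _ ?Mx ?i ?j] => case: (@fun_of_matrix _ _ _ Mx i j) => ? ? end.
all: rewrite /cexpi /= ?cosN ?sinN.
all: ring.
Qed.

Local Close Scope classical_set_scope.
Theorem mainTheorem9 (R : realType) (d s t : nat)
  (F : ('I_d -> R) -> 'M[quat R]_(s, t))
  (Z W : ('I_d -> R) -> 'M[R[i]]_(s, t))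
  (* F = Z + W j on T^d *)
  (hF : forall th : 'I_d -> R, (forall l, - pi <= th l < pi) ->
          F th = \matrix_(a < s, b < t) qadd (c2q (Z th a b)) (qmul (c2q (W th a b)) (qj R)))
  (* F in L^1(T^d; H^{s x t}) *)
  (hL1 : forall (a : 'I_s) (b : 'I_t),
          [/\ tintegrable (fun th => q0 (F th a b)), tintegrable (fun th => q1 (F th a b)),
              tintegrable (fun th => q2 (F th a b)) & tintegrable (fun th => q3 (F th a b))])
  (n : 'I_d -> nat) :
  blockPhi (ToepL n F) = Toep n (GL Z W) /\ blockPhi (ToepR n F) = Toep n (GR Z W).
Proof.
split; apply/funext => al; apply/funext => be; rewrite /blockPhi /ToepL /ToepR /Toep.
  exact: keyL.
exact: keyR.
Qed.
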